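(* The functor $\mathcal{F}:\mathbf{Cal^0_{Sym}}\to\mathbf{Chu}_{2_0}$ is full and faithful. In particular, for objects $\mathcal{L}_1,\mathcal{L}_2$ of $\mathbf{Cal^0_{Sym}}$, $\mathcal{F}(\mathcal{L}_1)\cong\mathcal{F}(\mathcal{L}_2)$ implies $\mathcal{L}_1\cong\mathcal{L}_2$.
   Context: Lattice notation: $\Sigma,\Sigma'$ atoms and coatoms; $\Sigma[a]$, $\Sigma'[a]$ atoms below / coatoms above $a$; for $f$ between complete lattices $f^\circ(b):=\bigvee\{a;f(a)\le b\}$. $\mathbf{Cal^0_{Sym}}$: objects are complete atomistic coatomistic lattices with $\Sigma[x]\cup\Sigma[y]\ne\Sigma$ for all coatoms $x,y$ and $\Sigma'[p]\cup\Sigma'[q]\ne\Sigma'$ for all atoms $p,q$; arrows are maps preserving arbitrary joins, sending atoms to atoms or $0$, with $f^\circ$ sending coatoms to coatoms or $1$. $\mathbf{Chu}_{2_0}$: objects are triples $(A,r,X)$ with $A,X$ pointed sets (base points $0_A,0_X$) and $r:A\times X\to\{0,1\}$ with $r(a,x)=0$ whenever $a=0_A$ or $x=0_X$; arrows $(A,r,X)\to(B,s,Y)$ are pairs $(f,g)$ of base-point preserving maps $f:A\to B$, $g:Y\to X$ with $s(f(a),y)=r(a,g(y))$ for all $a\in A,y\in Y$. The functor $\mathcal{F}$ sends $\mathcal{L}$ to $(\Sigma\cup\{0\},r,\Sigma'\cup\{1\})$, with $\Sigma\cup\{0\}$ pointed by $0$, $\Sigma'\cup\{1\}$ pointed by $1$,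 and $r(p,x)=0\iff p\le x$; on arrows $\mathcal{F}(f)=(f|_{\Sigma_1\cup\{0\}},f^\circ|_{\Sigma_2'\cup\{1\}})$. *)

(* Defs.v *)
Set Implicit Arguments.
Unset Strict Implicit.

Record CLat := {
  car :> Type;
  le : car -> car -> Prop;
  le_refl : forall x, le x x;
  le_trans : forall x y z, le x y -> le y z -> le x z;
  le_anti : forall x y, le x y -> le y x -> x = y;
  sup : (car -> Prop) -> car;
  sup_ub : forall (S : car -> Prop) x, S x -> le x (sup S);
  sup_least : forall (S : car -> Prop) y, (forall x, S x -> le x y) -> le (sup S) y
}.

Arguments le {c} _ _.
Arguments sup {c} _.

Section LatDefs.
Variable L : CLat.

Definition bot : L := sup (fun _ => False).
Definition top : L := sup (fun _ => True).
Definition inf (S : L -> Prop) : L := sup (fun y => forall x, S x -> le y x).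

Definition atom (p : L) : Prop :=
  p <> bot /\ forall x, le x p -> x = bot \/ x = p.
Definition coatom (c : L) : Prop :=
  c <> top /\ forall x, le c x -> x = top \/ x = c.

Definition atomistic : Prop :=
  forall x : L, x = sup (fun p => atom p /\ le p x).
Definition coatomistic : Prop :=
  forall x : L, x = inf (fun c => coatom c /\ le x c).

Definition CalSym : Prop :=
  atomistic /\ coatomistic /\
  (forall x y, coatom x -> coatom y ->
     ~ (forall p, atom p -> le p x \/ le p y)) /\
  (forall p q, atom p -> atom q ->
     ~ (forall c, coatom c -> le p c \/ le q c)).

Lemma bot_le (x : L) : le bot x.
Proof. apply sup_least. intros y H; destruct H. Qed.

Lemma le_top (x : L) : le x top.
Proof. apply sup_ub. exact I. Qed.
End LatDefs.

Arguments bot {L}.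
Arguments top {L}.
Arguments atom {L} _.
Arguments coatom {L} _.

Definition fcirc (L1 L2 : CLat) (f : L1 -> L2) (b : L2) : L1 :=
  sup (fun a => le (f a) b).

Record CalHom (L1 L2 : CLat) := {
  fn :> L1 -> L2;
  fn_join : forall S : L1 -> Prop,
      fn (sup S) = sup (fun y => exists x, S x /\ y = fn x);
  fn_atom : forall p, atom p -> atom (fn p) \/ fn p = bot;
  fn_coatom : forall c, coatom c -> coatom (fcirc fn c) \/ fcirc fn c = top
}.

Definition CalIso (L1 L2 : CLat) : Prop :=
  exists (f : CalHom L1 L2) (g : CalHom L2 L1),
    (forall x, g (f x) = x) /\ (forall y, f (g y) = y).

(* r a x  means  r(a,x) = 1 *)
Record ChuObj := {
  chA : Type;
  chX : Type;
  a0 : chA;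
  x0 : chX;
  rel : chA -> chX -> Prop;
  rel_a0 : forall x, ~ rel a0 x;
  rel_x0 : forall a, ~ rel a x0
}.

Arguments a0 c : clear implicits.
Arguments x0 c : clear implicits.
Arguments rel c _ _ : clear implicits.

Record ChuHom (C D : ChuObj) := {
  fwd : chA C -> chA D;
  bwd : chX D -> chX C;
  fwd0 : fwd (a0 C) = a0 D;
  bwd0 : bwd (x0 D) = x0 C;
  chu_adj : forall a y, rel D (fwd a) y <-> rel C a (bwd y)
}.

(* isomorphism in Chu_{2_0}: composites (f,g);(f',g') = (f' o f, g o g') are identities *)
Definition ChuIso (C D : ChuObj) : Prop :=
  exists (h : ChuHom C D) (k : ChuHom D C),
    (forall a, fwd k (fwd h a) = a) /\ (forall b, fwd h (fwd k b) = b) /\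
    (forall x, bwd h (bwd k x) = x) /\ (forall y, bwd k (bwd h y) = y).

Definition AtomsZ (L : CLat) : Type := { a : L | atom a \/ a = bot }.
Definition CoatomsO (L : CLat) : Type := { x : L | coatom x \/ x = top }.

Definition Fobj (L : CLat) : ChuObj.
Proof.
  refine {| chA := AtomsZ L; chX := CoatomsO L;
            a0 := exist _ bot (or_intror eq_refl);
            x0 := exist _ top (or_intror eq_refl);
            rel := fun a x => ~ le (proj1_sig a) (proj1_sig x) |}.
  - intros x H. apply H. apply bot_le.
  - intros a H. apply H. apply le_top.
Defined.

(* Main.v *)
Require Import Defs.
From Stdlib Require Import Classical ProofIrrelevance.

Section Gen.
Variable L : CLat.

Lemma sup_ext (S T : L -> Prop) : (forall x, S x <-> T x) -> sup S = sup T.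
Proof.
  intros H. apply le_anti.
  - apply sup_least. intros x Hx. apply sup_ub. apply H; exact Hx.
  - apply sup_least. intros x Hx. apply sup_ub. apply H; exact Hx.
Qed.

Lemma sup_down (b : L) : sup (fun a => le a b) = b.
Proof.
  apply le_anti.
  - apply sup_least. auto.
  - apply sup_ub. apply le_refl.
Qed.

Lemma atomistic_le (HA : atomistic L) (x y : L) :
  (forall p, atom p -> le p x -> le p y) -> le x y.
Proof.
  intros H. rewrite (HA x). apply sup_least. intros p [Hp Hpx]. auto.
Qed.

Lemma coatomistic_le (HC : coatomistic L) (x y : L) :
  (forall c, coatom c -> le y c -> le x c) -> le x y.
Proof.
  intros H. rewrite (HC y). unfold inf. apply sup_ub. intros c [Hc Hyc]. auto.
Qed.

Lemma le_bot (x : L) : le x bot -> x = bot.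
Proof. intros H. apply le_anti; auto. apply bot_le. Qed.
End Gen.

Lemma sig_eq {A : Type} {P : A -> Prop} (a b : {x : A | P x}) :
  proj1_sig a = proj1_sig b -> a = b.
Proof.
  destruct a as [a Ha], b as [b Hb]; simpl; intros ->; f_equal; apply proof_irrelevance.
Qed.

Section Full.
Variables L1 L2 : CLat.
Hypothesis HA1 : atomistic L1.
Hypothesis HC2 : coatomistic L2.
Variable h : ChuHom (Fobj L1) (Fobj L2).



Lemma adj (a : AtomsZ L1) (y : CoatomsO L2) :
  le (proj1_sig (fwd h a)) (proj1_sig y) <-> le (proj1_sig a) (proj1_sig (bwd h y)).
Proof.
  pose proof (chu_adj h a y) as E. simpl in E.
  split; intros H; apply NNPP; intros H'.
  - apply E in H'. contradiction.
  - apply E in H'. contradiction.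
Qed.

Definition ff (x : L1) : L2 :=
  sup (fun z => exists a : AtomsZ L1, le (proj1_sig a) x /\ z = proj1_sig (fwd h a)).

Lemma ff_fwd (a : AtomsZ L1) : ff (proj1_sig a) = proj1_sig (fwd h a).
Proof.
  apply le_anti.
  - apply sup_least. intros z [a' [Hle ->]].
    destruct (proj2_sig a') as [Hat | Hb].
    + destruct (proj2_sig a) as [Ha | Hb].
      * destruct (proj2 Ha _ Hle) as [E | E].
        -- exfalso. apply (proj1 Hat). exact E.
        -- rewrite (sig_eq a' a E). apply le_refl.
      * rewrite Hb in Hle. exfalso. apply (proj1 Hat). apply le_bot. exact Hle.
    + assert (a' = a0 (Fobj L1)) as ->. { apply sig_eq. exact Hb. }
      rewrite (fwd0 h). apply bot_le.
  - apply sup_ub. exists a. split; [apply le_refl | reflexivity].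
Qed.

Lemma ff_le_coat (y : CoatomsO L2) (x : L1) :
  le (ff x) (proj1_sig y) <-> le x (proj1_sig (bwd h y)).
Proof.
  split; intros H.
  - apply atomistic_le; auto. intros p Hp Hpx.
    apply (adj (exist _ p (or_introl Hp)) y).
    eapply le_trans; [|exact H]. apply sup_ub.
    exists (exist _ p (or_introl Hp)). simpl. auto.
  - apply sup_least. intros z [a' [Hle ->]]. apply adj.
    eapply le_trans; eauto.
Qed.

Lemma ff_join (S : L1 -> Prop) :
  ff (sup S) = sup (fun y => exists x, S x /\ y = ff x).
Proof.
  apply le_anti.
  - apply sup_least. intros z [a [Hle ->]].
    apply coatomistic_le; auto. intros c Hc HR.
    set (y := exist (fun x => coatom x \/ x = top) c (or_introl Hc)).
    change c with (proj1_sig y). apply adj.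
    eapply le_trans; [exact Hle|]. apply sup_least. intros x Sx.
    apply ff_le_coat. simpl. eapply le_trans; [|exact HR].
    apply sup_ub. exists x; auto.
  - apply sup_least. intros y [x [Sx ->]].
    apply sup_least. intros z [a [Hle ->]].
    apply sup_ub. exists a. split; [|reflexivity].
    eapply le_trans; [exact Hle|]. apply sup_ub; exact Sx.
Qed.

Lemma ff_circ (y : CoatomsO L2) : fcirc ff (proj1_sig y) = proj1_sig (bwd h y).
Proof.
  unfold fcirc. rewrite <- (@sup_down L1 (proj1_sig (bwd h y))).
  apply sup_ext. intros x. apply ff_le_coat.
Qed.

Definition ffHom : CalHom L1 L2.
Proof.
  refine {| fn := ff; fn_join := ff_join |}.
  - intros p Hp.
    pose proof (ff_fwd (exist _ p (or_introl Hp))) as E; simpl in E; rewrite E.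
    exact (proj2_sig (fwd h (exist _ p (or_introl Hp)))).
  - intros c Hc.
    pose proof (ff_circ (exist _ c (or_introl Hc))) as E; simpl in E; rewrite E.
    exact (proj2_sig (bwd h (exist _ c (or_introl Hc)))).
Defined.

Lemma full_ex : exists f : CalHom L1 L2,
        (forall a, proj1_sig (fwd h a) = f (proj1_sig a)) /\
        (forall y, proj1_sig (bwd h y) = fcirc f (proj1_sig y)).
Proof.
  exists ffHom. split.
  - intros a. symmetry. apply ff_fwd.
  - intros y. symmetry. apply ff_circ.
Qed.
End Full.

Lemma inv_on (L1 L2 : CLat) (HA : atomistic L1) (f : CalHom L1 L2) (g : CalHom L2 L1) :
  (forall p, atom p -> g (f p) = p) -> forall x, g (f x) = x.
Proof.
  intros H x.
  pose proof (HA x) as Ex.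
  transitivity (g (f (sup (fun p => atom p /\ le p x)))).
  { rewrite <- Ex. reflexivity. }
  rewrite (fn_join f), (fn_join g).
  transitivity (sup (fun p => atom p /\ le p x)); [|symmetry; exact Ex].
  apply sup_ext. intros z. split.
  - intros [y [[q [Aq ->]] ->]]. rewrite H by apply Aq. exact Aq.
  - intros Az. exists (f z). split; [exists z; auto|]. symmetry. apply H, Az.
Qed.

Theorem lemma5p2 (L1 L2 : CLat) (H1 : CalSym L1) (H2 : CalSym L2) :
  (* faithful: F f = F g  implies  f = g *)
  (forall f g : CalHom L1 L2,
      (forall a : chA (Fobj L1), f (proj1_sig a) = g (proj1_sig a)) ->
      (forall y : chX (Fobj L2),
          fcirc f (proj1_sig y) = fcirc g (proj1_sig y)) ->
      forall x, f x = g x) /\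
  (* full: every Chu arrow F L1 -> F L2 is F f for some arrow f *)
  (forall h : ChuHom (Fobj L1) (Fobj L2),
      exists f : CalHom L1 L2,
        (forall a, proj1_sig (fwd h a) = f (proj1_sig a)) /\
        (forall y, proj1_sig (bwd h y) = fcirc f (proj1_sig y))) /\
  (* in particular: F L1 ~= F L2 implies L1 ~= L2 *)
  (ChuIso (Fobj L1) (Fobj L2) -> CalIso L1 L2).
Proof.
  destruct H1 as [HA1 [HC1 _]]. destruct H2 as [HA2 [HC2 _]].
  split; [|split].
  - intros f g Ha _ x. rewrite (HA1 x), (fn_join f), (fn_join g).
    apply sup_ext. intros z. split; intros [y [[Hy Hyx] ->]]; exists y; split; auto.
    + exact (Ha (exist _ y (or_introl Hy))).
    + symmetry. exact (Ha (exist _ y (or_introl Hy))).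
  - intros h. apply full_ex; auto.
  - intros [h [k [E1 [E2 _]]]].
    destruct (@full_ex L1 L2 HA1 HC2 h) as [f [Hf _]].
    destruct (@full_ex L2 L1 HA2 HC1 k) as [g [Hg _]].
    exists f, g. split.
    + apply inv_on; auto. intros p Hp.
      pose proof (Hf (exist _ p (or_introl Hp))) as E; simpl in E; rewrite <- E, <- Hg, E1. reflexivity.
    + apply inv_on; auto. intros p Hp.
      pose proof (Hg (exist _ p (or_introl Hp))) as E; simpl in E; rewrite <- E, <- Hf, E2. reflexivity.
Qed.
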